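(* Let $G$ be a group with a BN-pair $(B,N)$ (Weyl group $(W,S)$, $S$ finite) carrying two group topologies $\mathcal{S}\subseteq\mathcal{T}$. Suppose $(G,\mathcal{S})$ satisfies the hypotheses of Theorem 1.1 (namely: $G$ is Hausdorff, its completion is a group, $|P_s:B|<\infty$ for all $s\in S$, and $B$ is open) or of Theorem 1.2. If $\widehat{\mathrm{Id}_B}:\widehat{(B,\mathcal{T}_B)}\to\widehat{(B,\mathcal{S}_B)}$ is surjective, then $\widehat{\mathrm{Id}}:\widehat{(G,\mathcal{T})}\to\widehat{(G,\mathcal{S})}$ is surjective.
   Context: Completions are right uniform completions (minimal Cauchy filters). $\widehat{\mathrm{Id}}$ and $\widehat{\mathrm{Id}_B}$ are the unique continuous extensions of the identity maps. Hypotheses of Theorem 1.2 for a topology on $B$: $(B,\mathcal T)$ is a topological group, its completion is a group, the neighbourhoods of $1$ in $B$ form a basis at $1$ of a group topology on each minimal parabolic $P_s=\langle B,\dot s\rangle$, and $|P_s:B|<\infty$. *)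

(* Defs.v *)
From Stdlib Require Import List.

Set Implicit Arguments.

Record Grp := {
  carrier :> Type;
  mul : carrier -> carrier -> carrier;
  inv : carrier -> carrier;
  one : carrier;
  mulA : forall x y z, mul x (mul y z) = mul (mul x y) z;
  mul1g : forall x, mul one x = x;
  mulVg : forall x, mul (inv x) x = one
}.
Arguments mul {g}.
Arguments inv {g}.
Arguments one {g}.

Section Defs.
Context {G : Grp}.

Definition subset (A A' : G -> Prop) : Prop := forall x, A x -> A' x.

Definition is_subgroup (H : G -> Prop) : Prop :=
  H one /\ (forall x y, H x -> H y -> H (mul x y)) /\ (forall x, H x -> H (inv x)).

Definition generated (A : G -> Prop) : G -> Prop :=
  fun x => forall K, is_subgroup K -> subset A K -> K x.

Definition is_topology_on (H : G -> Prop) (tau : (G -> Prop) -> Prop) : Prop :=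
  (forall O, tau O -> subset O H) /\
  tau H /\
  (forall Fam : (G -> Prop) -> Prop, (forall O, Fam O -> tau O) ->
      tau (fun x => exists O, Fam O /\ O x)) /\
  (forall O O', tau O -> tau O' -> tau (fun x => O x /\ O' x)).

Definition nbhd (tau : (G -> Prop) -> Prop) (x : G) (V : G -> Prop) : Prop :=
  exists O, tau O /\ O x /\ subset O V.

Definition is_top_group (H : G -> Prop) (tau : (G -> Prop) -> Prop) : Prop :=
  is_subgroup H /\ is_topology_on H tau /\
  (forall O, tau O -> forall x y, H x -> H y -> O (mul x y) ->
     exists U V, tau U /\ tau V /\ U x /\ V y /\
       forall u v, U u -> V v -> O (mul u v)) /\
  (forall O, tau O -> forall x, H x -> O (inv x) ->
     exists U, tau U /\ U x /\ forall u, U u -> O (inv u)).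

Definition hausdorff (H : G -> Prop) (tau : (G -> Prop) -> Prop) : Prop :=
  forall x y, H x -> H y -> x <> y ->
    exists U V, tau U /\ tau V /\ U x /\ V y /\ forall z, U z -> V z -> False.

Definition subspace (tau : (G -> Prop) -> Prop) (K : G -> Prop) : (G -> Prop) -> Prop :=
  fun O => exists O', tau O' /\ forall x, O x <-> (O' x /\ K x).

Definition is_filter (F : (G -> Prop) -> Prop) : Prop :=
  F (fun _ => True) /\ ~ F (fun _ => False) /\
  (forall M M', F M -> subset M M' -> F M') /\
  (forall M M', F M -> F M' -> F (fun x => M x /\ M' x)).

(* A Cauchy filter on the space (H, tau) (represented as a filter on G
   containing H) for the right uniformity, whose entourages are
   {(x,y) | x y^-1 in V}, V a neighbourhood of 1. *)
Definition cauchy (H : G -> Prop) (tau : (G -> Prop) -> Prop)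
  (F : (G -> Prop) -> Prop) : Prop :=
  is_filter F /\ F H /\
  forall V, nbhd tau one V ->
    exists M, F M /\ forall x y, M x -> M y -> V (mul x (inv y)).

(* minimal Cauchy filters = points of the completion \hat{(H,tau)} *)
Definition min_cauchy (H : G -> Prop) (tau : (G -> Prop) -> Prop)
  (F : (G -> Prop) -> Prop) : Prop :=
  cauchy H tau F /\
  forall F', cauchy H tau F' -> (forall M, F' M -> F M) -> (forall M, F M -> F' M).

(* The completion of (H,tau) is a group (criterion: inversion maps Cauchy
   filters to Cauchy filters, i.e. left and right uniformities have the
   same Cauchy filters). *)
Definition completion_is_group (H : G -> Prop) (tau : (G -> Prop) -> Prop) : Prop :=
  forall F, cauchy H tau F ->
    cauchy H tau (fun M => F (fun x => M (inv x))).

(* For tau_big finer than tau_small, the continuous extension of the identity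
   \hat{(H,tau_big)} -> \hat{(H,tau_small)} sends a minimal tau_big-Cauchy
   filter F to the unique minimal tau_small-Cauchy filter F' coarser than F.
   hatId_rel F F' expresses "hat Id (F) = F'". *)
Definition hatId_rel (H : G -> Prop) (tau_big tau_small : (G -> Prop) -> Prop)
  (F F' : (G -> Prop) -> Prop) : Prop :=
  min_cauchy H tau_big F /\ min_cauchy H tau_small F' /\ (forall M, F' M -> F M).

Definition hatId_surjective (H : G -> Prop) (tau_big tau_small : (G -> Prop) -> Prop)
  : Prop :=
  forall F', min_cauchy H tau_small F' -> exists F, hatId_rel H tau_big tau_small F F'.

(* BN-pairs.  Sdot is a finite list of representatives in N of the
   distinguished generators S of W = N/T, T = B cap N.                  *)
Definition Tgrp (B N : G -> Prop) : G -> Prop := fun x => B x /\ N x.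

Definition double_coset (B : G -> Prop) (w : G) : G -> Prop :=
  fun x => exists b b', B b /\ B b' /\ x = mul b (mul w b').

Definition is_BN_pair (B N : G -> Prop) (Sdot : list G) : Prop :=
  is_subgroup B /\ is_subgroup N /\
  (forall x : G, generated (fun y => B y \/ N y) x) /\
  (forall n t, N n -> Tgrp B N t -> Tgrp B N (mul (inv n) (mul t n))) /\
  (forall n, N n -> generated (fun y => Tgrp B N y \/ In y Sdot) n) /\
  (forall s, In s Sdot -> N s /\ ~ Tgrp B N s /\ Tgrp B N (mul s s)) /\
  (forall s n b, In s Sdot -> N n -> B b ->
     double_coset B n (mul s (mul b n)) \/
     double_coset B (mul s n) (mul s (mul b n))) /\
  (forall s, In s Sdot ->
     ~ (forall x, (exists b, B b /\ x = mul s (mul b s)) <-> B x)).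

Definition parabolic (B : G -> Prop) (s : G) : G -> Prop :=
  generated (fun y => B y \/ y = s).

Definition finite_index (P B : G -> Prop) : Prop :=
  exists l : list G, (forall g, In g l -> P g) /\
    forall x, P x -> exists g b, In g l /\ B b /\ x = mul g b.

Definition thm11_hyps (B : G -> Prop) (Sdot : list G)
  (sigma : (G -> Prop) -> Prop) : Prop :=
  hausdorff (fun _ => True) sigma /\
  completion_is_group (fun _ => True) sigma /\
  (forall s, In s Sdot -> finite_index (parabolic B s) B) /\
  sigma B.

Definition thm12_hyps_B (B : G -> Prop) (Sdot : list G)
  (rho : (G -> Prop) -> Prop) : Prop :=
  is_top_group B rho /\
  completion_is_group B rho /\
  (forall s, In s Sdot ->
     exists tau_s, is_top_group (parabolic B s) tau_s /\
       forall V, nbhd tau_s one V <-> exists U, nbhd rho one U /\ subset U V) /\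
  (forall s, In s Sdot -> finite_index (parabolic B s) B).

(* (G, sigma) satisfies the hypotheses of Theorem 1.2: the induced topology
   on B satisfies them and sigma is the topology on G determined by them,
   i.e. the sigma_B-neighbourhoods of 1 form a basis at 1 of sigma. *)
Definition thm12_hyps (B : G -> Prop) (Sdot : list G)
  (sigma : (G -> Prop) -> Prop) : Prop :=
  thm12_hyps_B B Sdot (subspace sigma B) /\
  forall V, nbhd sigma one V <-> exists U, nbhd (subspace sigma B) one U /\ subset U V.

End Defs.

(* Main.v *)
Require Import Defs.
From Stdlib Require Import List Classical.

Section Aux.
Context {G : Grp}.

Lemma mulgV' (x : G) : mul x (inv x) = one.
Proof.
  rewrite <- (mul1g G (mul x (inv x))).
  rewrite <- (mulVg G (inv x)) at 1.
  rewrite <- mulA. rewrite (mulA G (inv x) x (inv x)). rewrite mulVg, mul1g. apply mulVg.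
Qed.

Lemma mulg1' (x : G) : mul x one = x.
Proof. rewrite <- (mulVg G x), mulA, mulgV', mul1g. reflexivity. Qed.

Lemma mulgK' (x g : G) : mul (mul x g) (inv g) = x.
Proof. rewrite <- mulA, mulgV', mulg1'. reflexivity. Qed.

Lemma mulgKV' (x g : G) : mul (mul x (inv g)) g = x.
Proof. rewrite <- mulA, mulVg, mulg1'. reflexivity. Qed.

Definition push (g : G) (F : (G -> Prop) -> Prop) : (G -> Prop) -> Prop :=
  fun A => F (fun x => A (mul x g)).

Lemma fext {F : (G -> Prop) -> Prop} {A A'} :
  is_filter F -> F A -> (forall x, A x -> A' x) -> F A'.
Proof. intros [_ [_ [H _]]] HA Hs. exact (H _ _ HA Hs). Qed.

Lemma push_filter g F : is_filter F -> is_filter (push g F).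
Proof.
  intros [h1 [h2 [h3 h4]]]. unfold push. split; [exact h1|]. split; [exact h2|].
  split.
  - intros M M' HM Hs. apply (h3 _ _ HM). intros x; apply Hs.
  - intros M M' HM HM'. exact (h4 _ _ HM HM').
Qed.

Lemma push_cauchy (sigma : (G -> Prop) -> Prop) g F :
  cauchy (fun _ => True) sigma F -> cauchy (fun _ => True) sigma (push g F).
Proof.
  intros [Hf [HT Hc]]. split; [apply push_filter; exact Hf|]. split; [exact HT|].
  intros V HV. destruct (Hc V HV) as [M [HM HMV]].
  exists (fun z => M (mul z (inv g))). split.
  - unfold push. apply (fext Hf HM). intros x Hx. rewrite mulgK'. exact Hx.
  - intros x y Hx Hy. specialize (HMV _ _ Hx Hy).
    assert (E : mul (mul x (inv g)) (inv (mul y (inv g))) = mul x (inv y)).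
    { assert (I : inv (mul y (inv g)) = mul g (inv y)).
      { assert (U : forall a b : G, mul a b = one -> inv b = a).
        { intros a b Hab. symmetry. rewrite <- (mulg1' a). rewrite <- (mulgV' b).
          rewrite mulA. rewrite Hab. rewrite mul1g. reflexivity. }
        apply U. rewrite mulA. rewrite <- (mulA G g (inv y) y). rewrite mulVg, mulg1'.
        apply mulgV'. }
      rewrite I. rewrite <- mulA. rewrite (mulA G (inv g) g). rewrite mulVg, mul1g.
      reflexivity. }
    rewrite <- E. exact HMV.
Qed.

Lemma nbhd_sub_elim {sigma : (G -> Prop) -> Prop} {B V} :
  nbhd (subspace sigma B) one V ->
  exists W, nbhd sigma one W /\ forall x, W x -> B x -> V x.
Proof.
  intros [O [[O' [HO' HE]] [HO1 HOV]]]. exists O'. split.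
  - exists O'. split; [exact HO'|]. split; [apply HE; exact HO1|]. intros x h; exact h.
  - intros x Wx Bx. apply HOV. apply HE. split; assumption.
Qed.

Lemma cauchy_B_iff (sigma : (G -> Prop) -> Prop) {B F} :
  is_subgroup B -> F B ->
  (cauchy B (subspace sigma B) F <-> cauchy (fun _ => True) sigma F).
Proof.
  intros [B1 [BM BI]] FB. split.
  - intros [Hf [_ Hc]]. split; [exact Hf|]. split; [exact (proj1 Hf)|].
    intros V [O [HO [HO1 HOV]]].
    destruct (Hc (fun x => V x /\ B x)) as [M [HM HMV]].
    + exists (fun x => O x /\ B x). split.
      * exists O. split; [exact HO|]. intros x; tauto.
      * split; [split; assumption|]. intros x [h1 h2]; split; auto.
    + exists M. split; [exact HM|]. intros x y Hx Hy. apply (HMV _ _ Hx Hy).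
  - intros [Hf [_ Hc]]. split; [exact Hf|]. split; [exact FB|].
    intros V HV. destruct (nbhd_sub_elim HV) as [W [HW HWV]].
    destruct (Hc W HW) as [M [HM HMW]].
    exists (fun x => M x /\ B x). split.
    + destruct Hf as [_ [_ [_ h4]]]. apply h4; assumption.
    + intros x y [Mx Bx] [My By]. apply HWV; [apply HMW; assumption|].
      apply BM; [exact Bx| apply BI; exact By].
Qed.

Lemma restrict_B {tau : (G -> Prop) -> Prop} {B F} :
  is_subgroup B -> nbhd tau one B -> cauchy (fun _ => True) tau F ->
  ~ F (fun x => ~ B x) -> F B.
Proof.
  intros [B1 [BM BI]] HB [Hf [_ Hc]] Hn.
  destruct (Hc B HB) as [M [HM HMB]].
  destruct (classic (exists x0, M x0 /\ B x0)) as [[x0 [Mx0 Bx0]]|Hno].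
  - apply (fext Hf HM). intros x Mx. rewrite <- (mulgKV' x x0).
    apply BM; [apply HMB; assumption|exact Bx0].
  - exfalso. apply Hn. apply (fext Hf HM). intros x Mx Bx. apply Hno. exists x; auto.
Qed.

End Aux.

Theorem corollary1p4 (G : Grp) (B N : G -> Prop) (Sdot : list G)
  (sigma tau : (G -> Prop) -> Prop) :
  is_BN_pair B N Sdot ->
  is_top_group (fun _ : G => True) sigma ->
  is_top_group (fun _ : G => True) tau ->
  (forall O, sigma O -> tau O) ->
  (thm11_hyps B Sdot sigma \/ thm12_hyps B Sdot sigma) ->
  hatId_surjective B (subspace tau B) (subspace sigma B) ->
  hatId_surjective (fun _ : G => True) tau sigma.
Proof.
  intros HBN Hs Ht Hst Hcase Hsurj.
  assert (HBsg : is_subgroup B) by exact (proj1 HBN).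
  assert (B1 : B one) by exact (proj1 HBsg).
  assert (HsT : sigma (fun _ => True)) by exact (proj1 (proj2 (proj1 (proj2 Hs)))).
  assert (HBs : nbhd sigma one B).
  { destruct Hcase as [H11 | [_ H12]].
    - exists B. split; [exact (proj2 (proj2 (proj2 H11)))|]. split; [exact B1|]. intros x h; exact h.
    - apply H12. exists B. split; [|intros x h; exact h].
      exists B. split; [|split; [exact B1|intros x h; exact h]].
      exists (fun _ => True). split; [exact HsT|]. intros x; tauto. }
  assert (HBt : nbhd tau one B).
  { destruct HBs as [O [HO HO1]]. exists O. split; [apply Hst; exact HO|exact HO1]. }
  intros F' [[Ffil [FT Fc]] Fmin].
  destruct (Fc B HBs) as [M [HM HMB]].
  destruct (classic (exists y, M y)) as [[y My]|Hno].
  2:{ exfalso. apply (proj1 (proj2 Ffil)). apply (fext Ffil HM).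
      intros x Mx. apply Hno. exists x; exact Mx. }
  set (FB := push (inv y) F').
  assert (FBf : is_filter FB) by (apply push_filter; exact Ffil).
  assert (FBB : FB B).
  { unfold FB, push. apply (fext Ffil HM). intros x Mx. apply HMB; assumption. }
  assert (FBc : cauchy (fun _ => True) sigma FB).
  { apply push_cauchy. split; [exact Ffil|split; [exact FT|exact Fc]]. }
  assert (FBmin : min_cauchy B (subspace sigma B) FB).
  { split; [apply (proj2 (cauchy_B_iff sigma HBsg FBB)); exact FBc|].
    intros F'' HF'' Hsub.
    assert (F''B : F'' B) by exact (proj1 (proj2 HF'')).
    assert (F''f : is_filter F'') by exact (proj1 HF'').
    apply (cauchy_B_iff sigma HBsg F''B) in HF''.
    assert (Hp : cauchy (fun _ => True) sigma (push y F'')) by (apply push_cauchy; exact HF'').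
    assert (Hle : forall A, push y F'' A -> F' A).
    { intros A HA. apply Hsub in HA. unfold FB, push in HA.
      apply (fext Ffil HA). intros x h. rewrite mulgKV' in h. exact h. }
    intros A HA. unfold FB, push in HA. apply (Fmin _ Hp Hle) in HA.
    unfold push in HA. apply (fext F''f HA). intros x h. rewrite mulgK' in h. exact h. }
  destruct (Hsurj FB FBmin) as [FB2 [[FB2c FB2min] [_ FB2le]]].
  assert (FB2B : FB2 B) by exact (proj1 (proj2 FB2c)).
  assert (FB2f : is_filter FB2) by exact (proj1 FB2c).
  assert (FB2c' : cauchy (fun _ => True) tau FB2)
    by (apply (proj1 (cauchy_B_iff tau HBsg FB2B)); exact FB2c).
  exists (push y FB2). split; [|split].
  - split; [apply push_cauchy; exact FB2c'|].
    intros F'' HF'' Hsub.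
    assert (F''f : is_filter F'') by exact (proj1 HF'').
    set (G'' := push (inv y) F'').
    assert (G''c : cauchy (fun _ => True) tau G'') by (apply push_cauchy; exact HF'').
    assert (G''le : forall A, G'' A -> FB2 A).
    { intros A HA. unfold G'', push in HA. apply Hsub in HA. unfold push in HA.
      apply (fext FB2f HA). intros x h. rewrite mulgK' in h. exact h. }
    assert (G''B : G'' B).
    { apply (restrict_B HBsg HBt G''c). intros Hc. apply G''le in Hc.
      apply (proj1 (proj2 FB2f)).
      apply (fext FB2f (proj2 (proj2 (proj2 FB2f)) _ _ Hc FB2B)).
      intros x [h1 h2]. exact (h1 h2). }
    apply (proj2 (cauchy_B_iff tau HBsg G''B)) in G''c.
    intros A HA. unfold push in HA. apply (FB2min _ G''c G''le) in HA.
    unfold G'', push in HA. apply (fext F''f HA). intros x h. rewrite mulgKV' in h. exact h.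
  - split; [split; [exact Ffil|split; [exact FT|exact Fc]]|exact Fmin].
  - intros A HA. unfold push. apply FB2le. unfold FB, push.
    apply (fext Ffil HA). intros x h. rewrite mulgKV'. exact h.
Qed.
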